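(* Let $(A,a),(B,b),(C,c),(D,d)$ be four flags in $\mathbb{RP}^2$ in generic position. Let $X$ be the triple ratio of $(A,a),(B,b),(C,c)$; let $Y$ be the triple ratio of $(A,a),(C,c),(D,d)$; let $Z$ be the cross-ratio of the four lines $a, AB, AC, AD$ through $A$ (in this order); and let $W$ be the cross-ratio of the four lines $c, CD, CA, CB$ through $C$ (in this order). Then the convex quadrangle $ABCD$ is inscribed into the convex quadrangle $abcd$ if and only if $X,Y,Z,W$ are all positive.
   Context: A flag in $\mathbb{RP}^2$ is a pair $(A,a)$ of a point $A$ and a line $a\ni A$. The triple ratio of flags $(A,a),(B,b),(C,c)$ is $\frac{f_a(\tilde B)f_b(\tilde C)f_c(\tilde A)}{f_a(\tilde C)f_b(\tilde A)f_c(\tilde B)}$, where $f_a,f_b,f_c\in(\mathbb R^3)^*$ have kernels the planes corresponding to $a,b,c$ and $\tilde A,\tilde B,\tilde C$ are nonzero lifts of $A,B,C$ to $\mathbb R^3$. The cross-ratio of four points $x_1,x_2,x_3,x_4$ on a projective line (or of four concurrent lines, viewed as points of the projective line of lines through their common point) is $\frac{(x_1-x_2)(x_3-x_4)}{(x_1-x_4)(x_2-x_3)}$ in any affine coordinate. ''The convex quadrangle $ABCD$ is inscribed into the convex quadrangle $abcd$'' means: in some affine chart $\mathbb R^2\subset\mathbb{RP}^2$, the lines $a,b,c,d$ bound a compact convex quadrilateral whose sides, in cyclic order, lie on $a,b,c,d$, and $A,B,C,D$ lie in the relative interiors of the sides on $a,b,c,d$ respectively (so $ABCD$ is a convex quadrilateral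 with vertices in this cyclic order). *)

(* Defs.v *)
(* Projective plane RP^2 over R : realType, in homogeneous
   coordinates: points and lines are nonzero vectors of R^3 (a line is given by
   a linear form f, written as its coefficient vector, with f(P) = dot f P). *)
From HB Require Import structures.
From mathcomp Require Import all_boot all_order all_algebra.
From mathcomp Require Import reals.
Set Implicit Arguments. Unset Strict Implicit. Unset Printing Implicit Defensive.
Import Order.TTheory GRing.Theory Num.Theory.
Local Open Scope ring_scope.

Section Defs.
Variable R : realType.

Definition vec3 := (R * R * R)%type.

Definition v3x (u : vec3) : R := u.1.1.
Definition v3y (u : vec3) : R := u.1.2.
Definition v3z (u : vec3) : R := u.2.

Definition v3zero : vec3 := (0, 0, 0).

Definition dot (f P : vec3) : R := v3x f * v3x P + v3y f * v3y P + v3z f * v3z P.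

Definition cross (u v : vec3) : vec3 :=
  (v3y u * v3z v - v3z u * v3y v,
   v3z u * v3x v - v3x u * v3z v,
   v3x u * v3y v - v3y u * v3x v).

Definition det3 (u v w : vec3) : R := dot (cross u v) w.

Definition v3add (u v : vec3) : vec3 := (v3x u + v3x v, v3y u + v3y v, v3z u + v3z v).
Definition v3scale (k : R) (u : vec3) : vec3 := (k * v3x u, k * v3y u, k * v3z u).

Definition is_flag (P f : vec3) : Prop := P <> v3zero /\ f <> v3zero /\ dot f P = 0.

Definition line_through (P Q : vec3) : vec3 := cross P Q.

Definition triple_ratio (A a B b C c : vec3) : R :=
  (dot a B * dot b C * dot c A) / (dot a C * dot b A * dot c B).

(* Cross-ratio (x1-x2)(x3-x4)/((x1-x4)(x2-x3)) of four lines f1..f4 through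
   the point P, regarded as points of the projective line of lines through P.
   In homogeneous coordinates on that projective line, x_j - x_i is the 2x2
   determinant of the lifts; here the area form on the 2-dimensional space of
   forms vanishing at P is (f, g) |-> det3 f g P. *)
Definition cross_ratio_pencil (P f1 f2 f3 f4 : vec3) : R :=
  (det3 f1 f2 P * det3 f3 f4 P) / (det3 f1 f4 P * det3 f2 f3 P).

Definition generic4 (A a B b C c D d : vec3) : Prop :=
  (det3 A B C <> 0 /\ det3 A B D <> 0 /\ det3 A C D <> 0 /\ det3 B C D <> 0) /\
  (det3 a b c <> 0 /\ det3 a b d <> 0 /\ det3 a c d <> 0 /\ det3 b c d <> 0) /\
  (dot a B <> 0 /\ dot a C <> 0 /\ dot a D <> 0 /\
   dot b A <> 0 /\ dot b C <> 0 /\ dot b D <> 0 /\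
   dot c A <> 0 /\ dot c B <> 0 /\ dot c D <> 0 /\
   dot d A <> 0 /\ dot d B <> 0 /\ dot d C <> 0).

Definition pt2 := (R * R)%type.

Definition orient2 (p q r : pt2) : R :=
  (q.1 - p.1) * (r.2 - p.2) - (q.2 - p.2) * (r.1 - p.1).

Definition in_open_segment (p q r : pt2) : Prop :=
  exists t : R, 0 < t /\ t < 1 /\ p = ((1 - t) * q.1 + t * r.1, (1 - t) * q.2 + t * r.2).

Definition convex_quad (p1 p2 p3 p4 : pt2) : Prop :=
  (0 < orient2 p1 p2 p3 /\ 0 < orient2 p1 p2 p4 /\
   0 < orient2 p2 p3 p4 /\ 0 < orient2 p2 p3 p1 /\
   0 < orient2 p3 p4 p1 /\ 0 < orient2 p3 p4 p2 /\
   0 < orient2 p4 p1 p2 /\ 0 < orient2 p4 p1 p3) \/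
  (orient2 p1 p2 p3 < 0 /\ orient2 p1 p2 p4 < 0 /\
   orient2 p2 p3 p4 < 0 /\ orient2 p2 p3 p1 < 0 /\
   orient2 p3 p4 p1 < 0 /\ orient2 p3 p4 p2 < 0 /\
   orient2 p4 p1 p2 < 0 /\ orient2 p4 p1 p3 < 0).

(* An affine chart R^2 -> RP^2 is given by a basis (o, e1, e2) of R^3:
   x |-> [o + x.1 e1 + x.2 e2]; its image is the complement of a line. *)
Definition chart (o e1 e2 : vec3) (x : pt2) : vec3 :=
  v3add o (v3add (v3scale x.1 e1) (v3scale x.2 e2)).

Definition chart_coord (o e1 e2 : vec3) (P : vec3) (x : pt2) : Prop :=
  exists k : R, k != 0 /\ P = v3scale k (chart o e1 e2 x).

Definition on_line_chart (o e1 e2 : vec3) (f : vec3) (x : pt2) : Prop :=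
  dot f (chart o e1 e2 x) = 0.

(* "The convex quadrangle ABCD is inscribed into the convex quadrangle abcd":
   in some affine chart, the lines a,b,c,d bound a compact convex
   quadrilateral whose sides, in cyclic order, lie on a,b,c,d (so its vertices
   are d∩a, a∩b, b∩c, c∩d), and A,B,C,D lie in the relative interiors of the
   sides on a,b,c,d respectively. *)
Definition inscribed (A a B b C c D d : vec3) : Prop :=
  exists o e1 e2 : vec3, det3 o e1 e2 <> 0 /\
  exists v1 v2 v3 v4 : pt2,
    [/\ on_line_chart o e1 e2 d v1 /\ on_line_chart o e1 e2 a v1,
        on_line_chart o e1 e2 a v2 /\ on_line_chart o e1 e2 b v2,
        on_line_chart o e1 e2 b v3 /\ on_line_chart o e1 e2 c v3,
        on_line_chart o e1 e2 c v4 /\ on_line_chart o e1 e2 d v4 &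
        convex_quad v1 v2 v3 v4] /\
  exists pA pB pC pD : pt2,
    [/\ chart_coord o e1 e2 A pA /\ in_open_segment pA v1 v2,
        chart_coord o e1 e2 B pB /\ in_open_segment pB v2 v3,
        chart_coord o e1 e2 C pC /\ in_open_segment pC v3 v4 &
        chart_coord o e1 e2 D pD /\ in_open_segment pD v4 v1].

End Defs.

(* Main.v *)
Require Import Defs.
From HB Require Import structures.
From mathcomp Require Import all_boot all_order all_algebra.
From mathcomp Require Import reals.
From mathcomp Require Import ring lra.
Import Order.TTheory GRing.Theory Num.Theory.
Set Implicit Arguments. Unset Strict Implicit. Unset Printing Implicit Defensive.
Local Open Scope ring_scope.


Section Aux.
Variable R : realType.

Definition V4of (V1 V2 V3 : vec3 R) := v3add V1 (v3add (v3scale (-1) V2) V3).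
Definition nf_pt (k : R) (V W : vec3 R) (y : R) := v3scale k (v3add V (v3scale y W)).
Definition nf_ln (l : R) (V W : vec3 R) := v3scale l (cross V W).

Ltac destr := repeat match goal with
  | [ u : vec3 _ |- _ ] => destruct u as [[? ?] ?]
  | [ u : pt2 _ |- _ ] => destruct u as [? ?] end.
Ltac vsimpl := rewrite /V4of /nf_pt /nf_ln /chart /orient2 /det3 /dot /cross /v3add /v3scale /v3x /v3y /v3z /=.

Lemma v3eq (u v : vec3 R) : v3x u = v3x v -> v3y u = v3y v -> v3z u = v3z v -> u = v.
Proof. by case: u => [[? ?] ?]; case: v => [[? ?] ?]; rewrite /v3x /v3y /v3z /= => -> -> ->. Qed.

Ltac fsides := repeat (apply/andP; split); rewrite ?mulf_neq0 ?invr_neq0 //.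
Ltac vring := destr; vsimpl; ring.
Ltac vvring := destr; apply: v3eq; vsimpl; ring.

Lemma cramer (u v w P : vec3 R) : v3scale (det3 u v w) P =
  v3add (v3scale (det3 v w P) u) (v3add (v3scale (det3 w u P) v) (v3scale (det3 u v P) w)).
Proof. vvring. Qed.

Lemma dcramer (u v w P : vec3 R) : v3scale (det3 u v w) P =
  v3add (v3scale (dot u P) (cross v w)) (v3add (v3scale (dot v P) (cross w u)) (v3scale (dot w P) (cross u v))).
Proof. vvring. Qed.

Lemma crosscross (u v w : vec3 R) : cross (cross u v) (cross v w) = v3scale (det3 u v w) v.
Proof. vvring. Qed.

Lemma dot_cross_det (u v w : vec3 R) : dot u (cross v w) = det3 u v w.
Proof. vring. Qed.

Lemma det3_cyc (u v w : vec3 R) : det3 u v w = det3 v w u.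
Proof. vring. Qed.

Lemma det3_scale k1 k2 k3 (u v w : vec3 R) :
  det3 (v3scale k1 u) (v3scale k2 v) (v3scale k3 w) = k1 * k2 * k3 * det3 u v w.
Proof. vring. Qed.

Lemma dot_scale_l k (u v : vec3 R) : dot (v3scale k u) v = k * dot u v.
Proof. vring. Qed.

Lemma cross_scale k1 k2 (u v : vec3 R) : cross (v3scale k1 u) (v3scale k2 v) = v3scale (k1 * k2) (cross u v).
Proof. vvring. Qed.

Lemma add_0mid (x y z : vec3 R) : v3add x (v3add (v3scale 0 y) z) = v3add z x.
Proof. vvring. Qed.

Lemma I3 (a b c d : vec3 R) :
  v3add (v3scale (det3 a b c * det3 b c d) (cross d a))
   (v3add (v3scale (-1) (v3scale (det3 b c d * det3 c d a) (cross a b)))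
          (v3scale (det3 c d a * det3 d a b) (cross b c)))
  = v3scale (det3 d a b * det3 a b c) (cross c d).
Proof. vvring. Qed.

Lemma pt_decomp (A N1 N2 V1 V2 : vec3 R) (s bA dA m1 m2 : R) :
  s != 0 -> bA != 0 -> m1 != 0 -> m2 != 0 ->
  v3scale s A = v3add (v3scale bA N1) (v3scale dA N2) ->
  V1 = v3scale m1 N1 -> V2 = v3scale m2 N2 ->
  A = nf_pt (bA / (s * m1)) V1 V2 ((dA / (s * m2)) / (bA / (s * m1))).
Proof.
move=> hs hb h1 h2 E -> ->; move: E; destr; vsimpl; case=> E1 E2 E3.
apply: v3eq; rewrite /v3x /v3y /v3z /=; apply: (mulfI hs);
  [rewrite E1 | rewrite E2 | rewrite E3]; field; fsides.
Qed.

Lemma ln_decomp (a N1 N2 V1 V2 : vec3 R) (s m1 m2 : R) :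
  s != 0 -> m1 != 0 -> m2 != 0 -> cross N1 N2 = v3scale s a ->
  V1 = v3scale m1 N1 -> V2 = v3scale m2 N2 -> a = nf_ln ((m1 * m2 * s)^-1) V1 V2.
Proof.
move=> hs h1 h2 E -> ->; rewrite /nf_ln cross_scale E.
destr; apply: v3eq; vsimpl; field; fsides.
Qed.


End Aux.



Section Aux2.
Variable R : realType.
Lemma normal_form (A a B b C c D d : vec3 R) :
  is_flag A a -> is_flag B b -> is_flag C c -> is_flag D d -> generic4 A a B b C c D d ->
  exists V1 V2 V3 : vec3 R, exists la lb lc ld kA kB kC kD y1 y2 y3 y4 : R,
   [/\ det3 V1 V2 V3 != 0,
       [/\ la != 0, lb != 0, lc != 0 & ld != 0],
       [/\ kA != 0, kB != 0, kC != 0 & kD != 0],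
       [/\ a = nf_ln la V1 V2, b = nf_ln lb V2 V3, c = nf_ln lc V3 (V4of V1 V2 V3)
         & d = nf_ln ld (V4of V1 V2 V3) V1] &
       [/\ A = nf_pt kA V1 V2 y2, B = nf_pt kB V2 V3 y3, C = nf_pt kC V3 (V4of V1 V2 V3) y4
         & D = nf_pt kD (V4of V1 V2 V3) V1 y1]].
Proof.
move=> [_ [_ aA]] [_ [_ bB]] [_ [_ cC]] [_ [_ dD]].
move=> [_ [[habc [habd [hacd hbcd]]] [aB [aC [aD [bA [bC [bD [cA [cB [cD [dA [dB dC]]]]]]]]]]]]].
have hs : det3 d a b != 0 by rewrite det3_cyc; apply/eqP.
have hp : det3 a b c != 0 by apply/eqP.
have hq : det3 b c d != 0 by apply/eqP.
have hr : det3 c d a != 0 by rewrite det3_cyc det3_cyc; apply/eqP.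
move: (det3 d a b) (det3 a b c) (det3 b c d) (det3 c d a) (I3 a b c d) (crosscross d a b)
   (crosscross a b c) (crosscross b c d) (crosscross c d a)
   (dcramer d a b A) (dcramer a b c B) (dcramer b c d C) (dcramer c d a D) hs hp hq hr.
move=> s p q r eV4 x1 x2 x3 x4 EA EB EC ED hs hp hq hr.
rewrite aA add_0mid in EA; rewrite bB add_0mid in EB; rewrite cC add_0mid in EC;
rewrite dD add_0mid in ED.
have hpq : p * q != 0 by rewrite mulf_neq0.
have hqr : q * r != 0 by rewrite mulf_neq0.
have hrs : r * s != 0 by rewrite mulf_neq0.
have hsp : s * p != 0 by rewrite mulf_neq0.
have bA' : dot b A != 0 by apply/eqP.
have cB' : dot c B != 0 by apply/eqP.
have dC' : dot d C != 0 by apply/eqP.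
have aD' : dot a D != 0 by apply/eqP.
set V1 := v3scale (p * q) (cross d a).
set V2 := v3scale (q * r) (cross a b).
set V3 := v3scale (r * s) (cross b c).
have eV4' : V4of V1 V2 V3 = v3scale (s * p) (cross c d) by exact: eV4.
exists V1, V2, V3.
exists (p * q * (q * r) * s)^-1, (q * r * (r * s) * p)^-1, (r * s * (s * p) * q)^-1,
  (s * p * (p * q) * r)^-1.
exists (dot b A / (s * (p * q))), (dot c B / (p * (q * r))), (dot d C / (q * (r * s))),
  (dot a D / (r * (s * p))).
exists ((dot c D / (r * (p * q))) / (dot a D / (r * (s * p)))),
  ((dot d A / (s * (q * r))) / (dot b A / (s * (p * q)))),
  ((dot a B / (p * (r * s))) / (dot c B / (p * (q * r)))),
  ((dot b C / (q * (s * p))) / (dot d C / (q * (r * s)))).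
split.
- rewrite /V1 /V2 /V3 det3_scale {1}/det3 x1 dot_scale_l dot_cross_det.
  by rewrite !mulf_neq0 //; apply/eqP.
- by split; rewrite invr_neq0 // !mulf_neq0.
- by split; rewrite mulf_neq0 // invr_neq0 // !mulf_neq0.
- split.
  + apply: (ln_decomp hs hpq hqr x1) => //.
  + apply: (ln_decomp hp hqr hrs x2) => //.
  + apply: (ln_decomp hq hrs hsp x3) => //.
  + apply: (ln_decomp hr hsp hpq x4) => //.
- split.
  + apply: (pt_decomp hs bA' hpq hqr EA) => //.
  + apply: (pt_decomp hp cB' hqr hrs EB) => //.
  + apply: (pt_decomp hq dC' hrs hsp EC) => //.
  + apply: (pt_decomp hr aD' hsp hpq ED) => //.
Qed.

End Aux2.



Section Core.
Variable R : realType.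

Ltac destr := repeat match goal with
  | [ u : vec3 _ |- _ ] => destruct u as [[? ?] ?]
  | [ u : pt2 _ |- _ ] => destruct u as [? ?] end.
Ltac vsimpl := rewrite /V4of /nf_pt /nf_ln /chart /orient2 /det3 /dot /cross /v3add /v3scale /v3x /v3y /v3z /=.
Ltac fsides := repeat (apply/andP; split); rewrite ?mulf_neq0 ?invr_neq0 //.
Ltac vring := destr; vsimpl; ring.
Ltac vvring := destr; apply: v3eq; vsimpl; ring.

Lemma f_aB (V1 V2 V3 : vec3 R) (la kB y3 : R) : dot (nf_ln la V1 V2) (nf_pt kB V2 V3 y3) = la * kB * y3 * (det3 V1 V2 V3).
Proof. vring. Qed.
Lemma f_bC (V1 V2 V3 : vec3 R) (lb kC y4 : R) : dot (nf_ln lb V2 V3) (nf_pt kC V3 (V4of V1 V2 V3) y4) = lb * kC * y4 * (det3 V1 V2 V3).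
Proof. vring. Qed.
Lemma f_cA (V1 V2 V3 : vec3 R) (lc kA y2 : R) : dot (nf_ln lc V3 (V4of V1 V2 V3)) (nf_pt kA V1 V2 y2) = lc * kA * (1 + y2) * (det3 V1 V2 V3).
Proof. vring. Qed.
Lemma f_aC (V1 V2 V3 : vec3 R) (la kC y4 : R) : dot (nf_ln la V1 V2) (nf_pt kC V3 (V4of V1 V2 V3) y4) = la * kC * (1 + y4) * (det3 V1 V2 V3).
Proof. vring. Qed.
Lemma f_bA (V1 V2 V3 : vec3 R) (lb kA y2 : R) : dot (nf_ln lb V2 V3) (nf_pt kA V1 V2 y2) = lb * kA * (det3 V1 V2 V3).
Proof. vring. Qed.
Lemma f_cB (V1 V2 V3 : vec3 R) (lc kB y3 : R) : dot (nf_ln lc V3 (V4of V1 V2 V3)) (nf_pt kB V2 V3 y3) = lc * kB * (det3 V1 V2 V3).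
Proof. vring. Qed.
Lemma f_aD (V1 V2 V3 : vec3 R) (la kD y1 : R) : dot (nf_ln la V1 V2) (nf_pt kD (V4of V1 V2 V3) V1 y1) = la * kD * (det3 V1 V2 V3).
Proof. vring. Qed.
Lemma f_cD (V1 V2 V3 : vec3 R) (lc kD y1 : R) : dot (nf_ln lc V3 (V4of V1 V2 V3)) (nf_pt kD (V4of V1 V2 V3) V1 y1) = lc * kD * y1 * (det3 V1 V2 V3).
Proof. vring. Qed.
Lemma f_dA (V1 V2 V3 : vec3 R) (ld kA y2 : R) : dot (nf_ln ld (V4of V1 V2 V3) V1) (nf_pt kA V1 V2 y2) = ld * kA * y2 * (det3 V1 V2 V3).
Proof. vring. Qed.
Lemma f_dC (V1 V2 V3 : vec3 R) (ld kC y4 : R) : dot (nf_ln ld (V4of V1 V2 V3) V1) (nf_pt kC V3 (V4of V1 V2 V3) y4) = ld * kC * (det3 V1 V2 V3).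
Proof. vring. Qed.
Lemma f_aA (V1 V2 V3 : vec3 R) (la kA y2 : R) : dot (nf_ln la V1 V2) (nf_pt kA V1 V2 y2) = 0.
Proof. vring. Qed.
Lemma f_cC (V1 V2 V3 : vec3 R) (lc kC y4 : R) : dot (nf_ln lc V3 (V4of V1 V2 V3)) (nf_pt kC V3 (V4of V1 V2 V3) y4) = 0.
Proof. vring. Qed.
Lemma f_ABC (V1 V2 V3 : vec3 R) (kA kB kC y2 y3 y4 : R) : det3 (nf_pt kA V1 V2 y2) (nf_pt kB V2 V3 y3) (nf_pt kC V3 (V4of V1 V2 V3) y4)
  = kA * kB * kC * (det3 V1 V2 V3) * (1 + y4 + y3 * y4 + y2 * y3 * y4).
Proof. vring. Qed.
Lemma f_ACD (V1 V2 V3 : vec3 R) (kA kC kD y1 y2 y4 : R) : det3 (nf_pt kA V1 V2 y2) (nf_pt kC V3 (V4of V1 V2 V3) y4) (nf_pt kD (V4of V1 V2 V3) V1 y1)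
  = kA * kC * kD * (det3 V1 V2 V3) * (1 + y2 + y1 * y2 + y1 * y2 * y4).
Proof. vring. Qed.

Lemma det3_cyc' (u v w : vec3 R) : det3 u v w = det3 v w u.
Proof. vring. Qed.

Lemma eq_divKK (N M n m K : R) : N = K * n -> M = K * m -> K != 0 -> N / M = n / m.
Proof. by move=> -> -> hK; rewrite invfM mulrACA divff // mul1r. Qed.

Lemma dotself_neq0 (P : vec3 R) : P <> v3zero R -> dot P P != 0.
Proof.
case: P => [[x y] z] hP; apply/eqP => h; apply: hP.
move: h; rewrite /dot /v3x /v3y /v3z /= => h.
have hx : x = 0 by nra.
have hy : y = 0 by nra.
have hz : z = 0 by nra.
by rewrite hx hy hz.
Qed.

Lemma g1 (f P Q : vec3 R) : det3 f (cross P Q) P = dot f Q * dot P P - dot f P * dot Q P.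
Proof. vring. Qed.
Lemma g2 (P Q S : vec3 R) : det3 (cross P Q) (cross P S) P = det3 P Q S * dot P P.
Proof. vring. Qed.

Lemma pencil (P f Q S T : vec3 R) : dot f P = 0 -> P <> v3zero R ->
  cross_ratio_pencil P f (line_through P Q) (line_through P S) (line_through P T)
  = (dot f Q * det3 P S T) / (dot f T * det3 P Q S).
Proof.
move=> hf hP; have hn := dotself_neq0 hP.
rewrite /cross_ratio_pencil /line_through !g2 !g1 hf.
apply: (eq_divKK (K := dot P P * dot P P)); [ring | ring | by rewrite mulf_neq0].
Qed.

End Core.



Section S3.
Variable R : realType.

Lemma pos_div (x y : R) : 0 < x / y -> 0 < x * y.
Proof.
move=> h; have hy : y != 0 by apply/eqP => hy; move: h; rewrite hy invr0 mulr0 ltxx.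
have hyy : 0 < y * y by rewrite -expr2 exprn_even_gt0 //= hy orbT.
rewrite (_ : x * y = x / y * (y * y)); last by field.
exact: mulr_gt0.
Qed.

Lemma pos_of_sq (a b : R) : 0 < a * b ^+ 2 -> 0 < a.
Proof.
move=> h; case: (ltrP 0 a) => // ha.
have : a * b ^+ 2 <= 0 by apply: mulr_le0_ge0 => //; exact: sqr_ge0.
by rewrite leNgt h.
Qed.

Lemma pr1 (a b x : R) : 0 < a -> x = a * b -> 0 < x -> 0 < b.
Proof. by move=> ha -> ; rewrite pmulr_rgt0. Qed.
Lemma pr2 (a b x : R) : a < 0 -> x = a * b -> 0 < x -> b < 0.
Proof. by move=> ha -> ; rewrite nmulr_rgt0. Qed.

Lemma signs_dir (y1 y2 y3 y4 : R) :
  0 < y3 * y4 * (1 + y2) * (1 + y4) -> 0 < (1 + y4) * y1 * y2 * (1 + y2) ->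
  0 < y3 * (1 + y2 + y1 * y2 + y1 * y2 * y4) * (1 + y4 + y3 * y4 + y2 * y3 * y4) ->
  0 < y1 * (1 + y4 + y3 * y4 + y2 * y3 * y4) * (1 + y2 + y1 * y2 + y1 * y2 * y4) ->
  [/\ 0 < y1, 0 < y2, 0 < y3 & 0 < y4].
Proof.
set P := 1 + y4 + y3 * y4 + y2 * y3 * y4; set Q := 1 + y2 + y1 * y2 + y1 * y2 * y4.
move=> h1 h2 h3 h4.
have h13 : 0 < y1 * y3.
  apply: (@pos_of_sq _ (P * Q)).
  rewrite (_ : _ * _ = (y3 * Q * P) * (y1 * P * Q)); last by ring.
  exact: mulr_gt0.
have h24 : 0 < y2 * y4.
  have : 0 < (y1 * y3) * (y2 * y4).
    apply: (@pos_of_sq _ ((1 + y2) * (1 + y4))).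
    rewrite (_ : _ * _ = (y3 * y4 * (1 + y2) * (1 + y4)) * ((1 + y4) * y1 * y2 * (1 + y2)));
      last by ring.
    exact: mulr_gt0.
  by rewrite pmulr_rgt0.
have [y2p | y2n | y20] := ltgtP 0 y2.
- have y4p : 0 < y4 by rewrite -(pmulr_rgt0 _ y2p).
  have c : 0 < y4 * (1 + y2) * (1 + y4).
    by rewrite !mulr_gt0 // addr_gt0 // ltr01.
  have y3p : 0 < y3.
    by apply: (pr1 c _ h1); ring.
  have y1p : 0 < y1 by rewrite -(pmulr_lgt0 _ y3p).
  by split.
- exfalso.
  have y4n : y4 < 0 by rewrite -(nmulr_rgt0 _ y2n).
  have [y3p | y3n | y30] := ltgtP 0 y3.
  + have y1p : 0 < y1 by rewrite -(pmulr_rgt0 _ y3p) mulrC.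
    have e : (1 + y2) * (1 + y4) < 0.
      have c : y3 * y4 < 0 by nra.
      by apply: (pr2 c _ h1); ring.
    have qp : 0 < Q * P.
      by apply: (pr1 y3p _ h3); ring.
    have [a1 | a1 | a1] := ltgtP 0 (1 + y2).
    * have a2 : 1 + y4 < 0 by nra.
      have hP : P < 0 by rewrite /P; nra.
      have hQ : 0 < Q by rewrite /Q; nra.
      nra.
    * have a2 : 0 < 1 + y4 by nra.
      have hP : 0 < P by rewrite /P; nra.
      have hQ : Q < 0 by rewrite /Q; nra.
      nra.
    * by move: e; rewrite -a1 mul0r ltxx.
  + have y1n : y1 < 0 by rewrite -(nmulr_rgt0 _ y3n) mulrC.
    have e : 0 < (1 + y2) * (1 + y4).
      have c : 0 < y3 * y4 by nra.
      by apply: (pr1 c _ h1); ring.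
    have qp : Q * P < 0.
      by apply: (pr2 y3n _ h3); ring.
    have [a1 | a1 | a1] := ltgtP 0 (1 + y2).
    * have a2 : 0 < 1 + y4 by nra.
      have hP : 0 < P by rewrite /P; nra.
      have hQ : 0 < Q by rewrite /Q; nra.
      nra.
    * have a2 : 1 + y4 < 0 by nra.
      have hP : P < 0 by rewrite /P; nra.
      have hQ : Q < 0 by rewrite /Q; nra.
      nra.
    * by move: e; rewrite -a1 mul0r ltxx.
  + by move: h1; rewrite -y30 !mul0r ltxx.
- by move: h2; rewrite -y20 mulr0 mul0r ltxx.
Qed.

End S3.



Section S4.
Variable R : realType.

Ltac destr := repeat match goal with
  | [ u : vec3 _ |- _ ] => destruct u as [[? ?] ?]
  | [ u : pt2 _ |- _ ] => destruct u as [? ?] end.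
Ltac vsimpl := rewrite /V4of /nf_pt /nf_ln /chart /orient2 /det3 /dot /cross /v3add /v3scale /v3x /v3y /v3z /=.
Ltac fsides := repeat (apply/andP; split); rewrite ?mulf_neq0 ?invr_neq0 //.
Ltac vring := destr; vsimpl; ring.
Ltac vvring := destr; apply: v3eq; vsimpl; ring.

Lemma dot_nfln l (U W P : vec3 R) : dot (nf_ln l U W) P = l * det3 U W P.
Proof. vring. Qed.

Lemma online l (U W P : vec3 R) : l != 0 -> dot (nf_ln l U W) P = 0 -> det3 U W P = 0.
Proof. by rewrite dot_nfln => hl /eqP; rewrite mulf_eq0 (negbTE hl) => /eqP. Qed.

Lemma J1 (V1 V2 V3 P : vec3 R) : det3 (V4of V1 V2 V3) V1 P = det3 V1 V2 P + det3 V3 V1 P.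
Proof. vring. Qed.
Lemma J2 (V1 V2 V3 P : vec3 R) : det3 V3 (V4of V1 V2 V3) P = det3 V3 V1 P + det3 V2 V3 P.
Proof. vring. Qed.

Lemma decomp1 (V1 V2 V3 P : vec3 R) : det3 V1 V2 V3 != 0 -> det3 V3 V1 P = 0 ->
  det3 V1 V2 P = 0 -> exists m, P = v3scale m V1.
Proof.
move=> hD h3 h2; have E := cramer V1 V2 V3 P; rewrite h3 h2 in E.
exists (det3 V2 V3 P / det3 V1 V2 V3).
move: E hD; move: (det3 V2 V3 P) (det3 V1 V2 V3) => m D0 E hD.
move: E; destr; vsimpl; case=> E1 E2 E3.
apply: v3eq; rewrite /v3x /v3y /v3z /=; apply: (mulfI hD);
  [rewrite E1 | rewrite E2 | rewrite E3]; field; fsides.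
Qed.

Lemma chart_det (o e1 e2 : vec3 R) (p q r : pt2 R) :
  det3 (chart o e1 e2 p) (chart o e1 e2 q) (chart o e1 e2 r) = orient2 p q r * det3 o e1 e2.
Proof. vring. Qed.

Lemma chart_aff (o e1 e2 : vec3 R) (p q : pt2 R) t :
  chart o e1 e2 ((1 - t) * p.1 + t * q.1, (1 - t) * p.2 + t * q.2)
  = v3add (v3scale (1 - t) (chart o e1 e2 p)) (v3scale t (chart o e1 e2 q)).
Proof. vvring. Qed.

Lemma d124 (V1 V2 V3 : vec3 R) : det3 V1 V2 (V4of V1 V2 V3) = det3 V1 V2 V3. Proof. vring. Qed.
Lemma d234 (V1 V2 V3 : vec3 R) : det3 V2 V3 (V4of V1 V2 V3) = det3 V1 V2 V3. Proof. vring. Qed.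
Lemma d341 (V1 V2 V3 : vec3 R) : det3 V3 (V4of V1 V2 V3) V1 = det3 V1 V2 V3. Proof. vring. Qed.
Lemma d413 (V1 V2 V3 : vec3 R) : det3 (V4of V1 V2 V3) V1 V3 = det3 V1 V2 V3. Proof. vring. Qed.
Lemma d412 (V1 V2 V3 : vec3 R) : det3 (V4of V1 V2 V3) V1 V2 = det3 V1 V2 V3. Proof. vring. Qed.
Lemma d231 (V1 V2 V3 : vec3 R) : det3 V2 V3 V1 = det3 V1 V2 V3. Proof. vring. Qed.
Lemma d312 (V1 V2 V3 : vec3 R) : det3 V3 V1 V2 = det3 V1 V2 V3. Proof. vring. Qed.

Lemma cA1 (U W X : vec3 R) k y : dot (cross W X) (nf_pt k U W y) = k * det3 U W X.
Proof. vring. Qed.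
Lemma cA2 (U W X : vec3 R) k y : dot (cross X U) (nf_pt k U W y) = k * y * det3 U W X.
Proof. vring. Qed.
Lemma cA3 (U W X : vec3 R) k t m1 m2 :
  dot (cross W X) (v3scale k (v3add (v3scale (1 - t) (v3scale m1 U)) (v3scale t (v3scale m2 W))))
  = k * (1 - t) * m1 * det3 U W X.
Proof. vring. Qed.
Lemma cA4 (U W X : vec3 R) k t m1 m2 :
  dot (cross X U) (v3scale k (v3add (v3scale (1 - t) (v3scale m1 U)) (v3scale t (v3scale m2 W))))
  = k * t * m2 * det3 U W X.
Proof. vring. Qed.

Lemma coefA (U W X : vec3 R) kA y k t m1 m2 : det3 U W X != 0 -> k != 0 ->
  nf_pt kA U W y = v3scale k (v3add (v3scale (1 - t) (v3scale m1 U)) (v3scale t (v3scale m2 W))) ->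
  (1 - t) * m1 * y = t * m2.
Proof.
move=> hD hk E.
have e1 := congr1 (dot (cross W X)) E; have e2 := congr1 (dot (cross X U)) E.
rewrite cA1 cA3 in e1; rewrite cA2 cA4 in e2.
have h1 := mulIf hD e1; have h2 := mulIf hD e2.
apply: (mulfI hk).
by rewrite !mulrA -h1 h2.
Qed.

Lemma ypos (t m1 m2 y : R) : 0 < t -> t < 1 -> 0 < m1 * m2 -> (1 - t) * m1 * y = t * m2 -> 0 < y.
Proof.
move=> t0 t1 hm E.
have hm2 : m2 != 0 by apply/eqP => h; move: hm; rewrite h mulr0 ltxx.
have : 0 < ((1 - t) * (m1 * m2)) * y.
  rewrite (_ : _ * y = ((1 - t) * m1 * y) * m2); last by ring.
  rewrite E -mulrA mulr_gt0 // -expr2 exprn_even_gt0 //= hm2 orbT.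
by rewrite pmulr_rgt0 // mulr_gt0 // subr_gt0.
Qed.

Lemma msign (m1 m2 m3 m4 D0 d u1 u2 u3 u4 : R) :
  m1 * m2 * m3 * D0 = u1 * d -> m1 * m2 * m4 * D0 = u2 * d ->
  m2 * m3 * m4 * D0 = u3 * d -> m3 * m4 * m1 * D0 = u4 * d -> d != 0 ->
  (0 < u1 /\ 0 < u2 /\ 0 < u3 /\ 0 < u4) \/ (u1 < 0 /\ u2 < 0 /\ u3 < 0 /\ u4 < 0) ->
  [/\ 0 < m1 * m2, 0 < m2 * m3, 0 < m3 * m4 & 0 < m4 * m1].
Proof.
move=> e1 e2 e3 e4 hd hc.
have hdd : 0 < d ^+ 2 by rewrite exprn_even_gt0 //= hd orbT.
have P : forall a b, ((0 < a /\ 0 < b) \/ (a < 0 /\ b < 0)) -> 0 < a * b * d ^+ 2.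
  move=> a b [[ha hb]|[ha hb]]; apply: mulr_gt0 => //; [exact: mulr_gt0 | nra].
have [q12 q13 q34 q42] : [/\ 0 < u1 * u2 * d ^+ 2, 0 < u1 * u3 * d ^+ 2,
    0 < u3 * u4 * d ^+ 2 & 0 < u4 * u2 * d ^+ 2].
  by case: hc => [[? [? [? ?]]]|[? [? [? ?]]]]; split; apply: P; tauto.
split.
- apply: (@pos_of_sq _ _ (m3 * m4 * D0)).
  rewrite (_ : _ * _ ^+ 2 = (m2 * m3 * m4 * D0) * (m3 * m4 * m1 * D0)); last by ring.
  by rewrite e3 e4; move: q34; congr (_ < _); ring.
- apply: (@pos_of_sq _ _ (m1 * m4 * D0)).
  rewrite (_ : _ * _ ^+ 2 = (m3 * m4 * m1 * D0) * (m1 * m2 * m4 * D0)); last by ring.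
  by rewrite e4 e2; move: q42; congr (_ < _); ring.
- apply: (@pos_of_sq _ _ (m1 * m2 * D0)).
  rewrite (_ : _ * _ ^+ 2 = (m1 * m2 * m3 * D0) * (m1 * m2 * m4 * D0)); last by ring.
  by rewrite e1 e2; move: q12; congr (_ < _); ring.
- apply: (@pos_of_sq _ _ (m2 * m3 * D0)).
  rewrite (_ : _ * _ ^+ 2 = (m1 * m2 * m3 * D0) * (m2 * m3 * m4 * D0)); last by ring.
  by rewrite e1 e3; move: q13; congr (_ < _); ring.
Qed.

End S4.



Section S5.
Variable R : realType.

Ltac destr := repeat match goal with
  | [ u : vec3 _ |- _ ] => destruct u as [[? ?] ?]
  | [ u : pt2 _ |- _ ] => destruct u as [? ?] end.
Ltac vsimpl := rewrite /V4of /nf_pt /nf_ln /chart /orient2 /det3 /dot /cross /v3add /v3scale /v3x /v3y /v3z /=.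
Ltac fsides := repeat (apply/andP; split); rewrite ?mulf_neq0 ?invr_neq0 //.
Ltac vring := destr; vsimpl; ring.
Ltac vvring := destr; apply: v3eq; vsimpl; ring.

Lemma insc_pos (V1 V2 V3 : vec3 R) la lb lc ld kA kB kC kD y1 y2 y3 y4 :
  det3 V1 V2 V3 != 0 -> la != 0 -> lb != 0 -> lc != 0 -> ld != 0 ->
  inscribed (nf_pt kA V1 V2 y2) (nf_ln la V1 V2) (nf_pt kB V2 V3 y3) (nf_ln lb V2 V3)
    (nf_pt kC V3 (V4of V1 V2 V3) y4) (nf_ln lc V3 (V4of V1 V2 V3))
    (nf_pt kD (V4of V1 V2 V3) V1 y1) (nf_ln ld (V4of V1 V2 V3) V1) ->
  [/\ 0 < y1, 0 < y2, 0 < y3 & 0 < y4].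
Proof.
move=> hD hla hlb hlc hld [o [e1 [e2 [hd [v1 [v2 [v3 [v4 [[[h1d h1a] [h2a h2b] [h3b h3c] [h4c h4d] hcv]
  [pA [pB [pC [pD [[cA sA] [cB sB] [cC sC] [cD sD]]]]]]]]]]]]]]].
have q1a := online hla h1a; have q1d := online hld h1d.
rewrite J1 q1a add0r in q1d.
have [m1 eP1] := decomp1 hD q1d q1a.
have q2a := online hla h2a; have q2b := online hlb h2b.
have hD2 : det3 V2 V3 V1 != 0 by rewrite d231.
have [m2 eP2] := decomp1 hD2 q2a q2b.
have q3b := online hlb h3b; have q3c := online hlc h3c.
rewrite J2 q3b addr0 in q3c.
have hD3 : det3 V3 V1 V2 != 0 by rewrite d312.
have [m3 eP3] := decomp1 hD3 q3b q3c.
have q4c := online hlc h4c; have q4d := online hld h4d.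
have hD4 : det3 (V4of V1 V2 V3) V1 V3 != 0 by rewrite d413.
have [m4 eP4] := decomp1 hD4 q4c q4d.
have hd' : det3 o e1 e2 != 0 by apply/eqP.
have E1 : m1 * m2 * m3 * det3 V1 V2 V3 = orient2 v1 v2 v3 * det3 o e1 e2.
  by rewrite -chart_det eP1 eP2 eP3 det3_scale.
have E2 : m1 * m2 * m4 * det3 V1 V2 V3 = orient2 v1 v2 v4 * det3 o e1 e2.
  by rewrite -chart_det eP1 eP2 eP4 det3_scale d124.
have E3 : m2 * m3 * m4 * det3 V1 V2 V3 = orient2 v2 v3 v4 * det3 o e1 e2.
  by rewrite -chart_det eP2 eP3 eP4 det3_scale d234.
have E4 : m3 * m4 * m1 * det3 V1 V2 V3 = orient2 v3 v4 v1 * det3 o e1 e2.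
  by rewrite -chart_det eP3 eP4 eP1 det3_scale d341.
have hc : (0 < orient2 v1 v2 v3 /\ 0 < orient2 v1 v2 v4 /\ 0 < orient2 v2 v3 v4 /\
     0 < orient2 v3 v4 v1) \/ (orient2 v1 v2 v3 < 0 /\ orient2 v1 v2 v4 < 0 /\
     orient2 v2 v3 v4 < 0 /\ orient2 v3 v4 v1 < 0).
  by case: hcv => [[a1 [a2 [a3 [_ [a5 _]]]]]|[a1 [a2 [a3 [_ [a5 _]]]]]]; [left|right].
have [m12 m23 m34 m41] := msign E1 E2 E3 E4 hd' hc.
split.
- case: cD => k [hk eD]; case: sD => t [t0 [t1 ept]].
  rewrite ept chart_aff eP4 eP1 in eD.
  have hD5 : det3 (V4of V1 V2 V3) V1 V2 != 0 by rewrite d412.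
  exact: (ypos t0 t1 m41 (coefA hD5 hk eD)).
- case: cA => k [hk eA]; case: sA => t [t0 [t1 ept]].
  rewrite ept chart_aff eP1 eP2 in eA.
  exact: (ypos t0 t1 m12 (coefA hD hk eA)).
- case: cB => k [hk eB]; case: sB => t [t0 [t1 ept]].
  rewrite ept chart_aff eP2 eP3 in eB.
  exact: (ypos t0 t1 m23 (coefA hD2 hk eB)).
- case: cC => k [hk eC]; case: sC => t [t0 [t1 ept]].
  rewrite ept chart_aff eP3 eP4 in eC.
  have hD6 : det3 V3 (V4of V1 V2 V3) V1 != 0 by rewrite d341.
  exact: (ypos t0 t1 m34 (coefA hD6 hk eC)).
Qed.

Lemma frame_det (V1 V2 V3 : vec3 R) :
  det3 V1 (v3add V2 (v3scale (-1) V1)) (v3add (V4of V1 V2 V3) (v3scale (-1) V1)) = det3 V1 V2 V3.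
Proof. vring. Qed.

Lemma pos_insc (V1 V2 V3 : vec3 R) la lb lc ld kA kB kC kD y1 y2 y3 y4 :
  det3 V1 V2 V3 != 0 -> kA != 0 -> kB != 0 -> kC != 0 -> kD != 0 ->
  [/\ 0 < y1, 0 < y2, 0 < y3 & 0 < y4] ->
  inscribed (nf_pt kA V1 V2 y2) (nf_ln la V1 V2) (nf_pt kB V2 V3 y3) (nf_ln lb V2 V3)
    (nf_pt kC V3 (V4of V1 V2 V3) y4) (nf_ln lc V3 (V4of V1 V2 V3))
    (nf_pt kD (V4of V1 V2 V3) V1 y1) (nf_ln ld (V4of V1 V2 V3) V1).
Proof.
move=> hD hkA hkB hkC hkD [y1p y2p y3p y4p].
have p1 : 0 < 1 + y1 by lra.
have p2 : 0 < 1 + y2 by lra.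
have p3 : 0 < 1 + y3 by lra.
have p4 : 0 < 1 + y4 by lra.
have n1 := lt0r_neq0 p1; have n2 := lt0r_neq0 p2.
have n3 := lt0r_neq0 p3; have n4 := lt0r_neq0 p4.
exists V1, (v3add V2 (v3scale (-1) V1)), (v3add (V4of V1 V2 V3) (v3scale (-1) V1)).
split; first by rewrite frame_det; apply/eqP.
exists (0, 0), (1, 0), (1, 1), (0, 1).
split.
  split; [split; rewrite /on_line_chart; vring | split; rewrite /on_line_chart; vring
     | split; rewrite /on_line_chart; vring | split; rewrite /on_line_chart; vring | ].
  by left; rewrite /orient2 /=; do !split; lra.
exists (y2 / (1 + y2), 0), (1, y3 / (1 + y3)), (1 - y4 / (1 + y4), 1), (0, 1 - y1 / (1 + y1)).
split; split.
- exists (kA * (1 + y2)); split; first by rewrite mulf_neq0.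
  destr; apply: v3eq; vsimpl; field; fsides.
- exists (y2 / (1 + y2)); split; first by rewrite divr_gt0.
  split; first by rewrite ltr_pdivrMr // mul1r; lra.
  by rewrite /=; congr (_, _); field.
- exists (kB * (1 + y3)); split; first by rewrite mulf_neq0.
  destr; apply: v3eq; vsimpl; field; fsides.
- exists (y3 / (1 + y3)); split; first by rewrite divr_gt0.
  split; first by rewrite ltr_pdivrMr // mul1r; lra.
  by rewrite /=; congr (_, _); field.
- exists (kC * (1 + y4)); split; first by rewrite mulf_neq0.
  destr; apply: v3eq; vsimpl; field; fsides.
- exists (y4 / (1 + y4)); split; first by rewrite divr_gt0.
  split; first by rewrite ltr_pdivrMr // mul1r; lra.
  by rewrite /=; congr (_, _); field.
- exists (kD * (1 + y1)); split; first by rewrite mulf_neq0.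
  destr; apply: v3eq; vsimpl; field; fsides.
- exists (y1 / (1 + y1)); split; first by rewrite divr_gt0.
  split; first by rewrite ltr_pdivrMr // mul1r; lra.
  by rewrite /=; congr (_, _); field.
Qed.

End S5.



Section S6.
Variable R : realType.

Lemma core_main (V1 V2 V3 : vec3 R) la lb lc ld kA kB kC kD y1 y2 y3 y4 :
  det3 V1 V2 V3 != 0 -> [/\ la != 0, lb != 0, lc != 0 & ld != 0] ->
  [/\ kA != 0, kB != 0, kC != 0 & kD != 0] ->
  nf_pt kA V1 V2 y2 <> v3zero R -> nf_pt kC V3 (V4of V1 V2 V3) y4 <> v3zero R ->
  let A := nf_pt kA V1 V2 y2 in let a := nf_ln la V1 V2 in
  let B := nf_pt kB V2 V3 y3 in let b := nf_ln lb V2 V3 in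
  let C := nf_pt kC V3 (V4of V1 V2 V3) y4 in let c := nf_ln lc V3 (V4of V1 V2 V3) in
  let D := nf_pt kD (V4of V1 V2 V3) V1 y1 in let d := nf_ln ld (V4of V1 V2 V3) V1 in
  let X := triple_ratio A a B b C c in
  let Y := triple_ratio A a C c D d in
  let Z := cross_ratio_pencil A a (line_through A B) (line_through A C) (line_through A D) in
  let W := cross_ratio_pencil C c (line_through C D) (line_through C A) (line_through C B) in
  inscribed A a B b C c D d <-> [/\ 0 < X, 0 < Y, 0 < Z & 0 < W].
Proof.
move=> hD [hla hlb hlc hld] [hkA hkB hkC hkD] hA0 hC0 A a B b C c D d X Y Z W.

have eX : X = y3 * y4 * (1 + y2) / (1 + y4).
  rewrite /X /triple_ratio /A /a /B /b /C /c /D /d (f_aB V1) (f_bC V1) (f_cA V1 V2 V3) (f_aC V1 V2 V3)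
    (f_bA V1 V2 V3) (f_cB V1 V2 V3).
  apply: (eq_divKK (K := la * lb * lc * kA * kB * kC * det3 V1 V2 V3 ^+ 3)); [ring | ring |].
  by rewrite !mulf_neq0 // expf_neq0.
have eY : Y = (1 + y4) * y1 * y2 / (1 + y2).
  rewrite /Y /triple_ratio /A /a /B /b /C /c /D /d (f_aC V1 V2 V3) (f_cD V1 V2 V3) (f_dA V1 V2 V3) (f_aD V1 V2 V3)
    (f_cA V1 V2 V3) (f_dC V1 V2 V3).
  apply: (eq_divKK (K := la * lc * ld * kA * kC * kD * det3 V1 V2 V3 ^+ 3)); [ring | ring |].
  by rewrite !mulf_neq0 // expf_neq0.
have eZ : Z = y3 * (1 + y2 + y1 * y2 + y1 * y2 * y4) / (1 + y4 + y3 * y4 + y2 * y3 * y4).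
  rewrite /Z /A /a /B /b /C /c /D /d pencil ?(f_aA V1 V2 V3) //.
  rewrite (f_aB V1) (f_aD V1 V2 V3) (f_ACD V1 V2 V3) (f_ABC V1 V2 V3).
  apply: (eq_divKK (K := la * kA * kB * kC * kD * det3 V1 V2 V3 ^+ 2)); [ring | ring |].
  by rewrite !mulf_neq0 // expf_neq0.
have eW : W = y1 * (1 + y4 + y3 * y4 + y2 * y3 * y4) / (1 + y2 + y1 * y2 + y1 * y2 * y4).
  rewrite /W /A /a /B /b /C /c /D /d pencil ?(f_cC V1 V2 V3) //.
  rewrite (f_cD V1 V2 V3) (f_cB V1 V2 V3) (det3_cyc' (nf_pt kC _ _ _) (nf_pt kA _ _ _))
    (det3_cyc' (nf_pt kC _ _ _) (nf_pt kD _ _ _)) (det3_cyc' (nf_pt kD _ _ _) (nf_pt kA _ _ _)).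
  rewrite (f_ACD V1 V2 V3) (f_ABC V1 V2 V3).
  apply: (eq_divKK (K := lc * kA * kB * kC * kD * det3 V1 V2 V3 ^+ 2)); [ring | ring |].
  by rewrite !mulf_neq0 // expf_neq0.
rewrite eX eY eZ eW; split.
- move=> hi; have [y1p y2p y3p y4p] := insc_pos hD hla hlb hlc hld hi.
  have p1 : 0 < 1 + y1 by lra.
  have p2 : 0 < 1 + y2 by lra.
  have p4 : 0 < 1 + y4 by lra.
  have pP : 0 < 1 + y4 + y3 * y4 + y2 * y3 * y4.
    by rewrite !addr_gt0 ?mulr_gt0 // ltr01.
  have pQ : 0 < 1 + y2 + y1 * y2 + y1 * y2 * y4.
    by rewrite !addr_gt0 ?mulr_gt0 // ltr01.
  by split; rewrite ?divr_gt0 ?mulr_gt0.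
- move=> [/pos_div h1 /pos_div h2 /pos_div h3 /pos_div h4].
  apply: pos_insc => //.
  apply: signs_dir => //.
Qed.

End S6.


Unset Implicit Arguments.

Theorem mainTheorem2 (R : realType) (A a B b C c D d : vec3 R)
  (hA : is_flag A a) (hB : is_flag B b) (hC : is_flag C c) (hD : is_flag D d)
  (hgen : generic4 A a B b C c D d) :
  let X := triple_ratio A a B b C c in
  let Y := triple_ratio A a C c D d in
  let Z := cross_ratio_pencil A a (line_through A B) (line_through A C) (line_through A D) in
  let W := cross_ratio_pencil C c (line_through C D) (line_through C A) (line_through C B) in
  inscribed A a B b C c D d <-> [/\ 0 < X, 0 < Y, 0 < Z & 0 < W].
Proof.
have [V1 [V2 [V3 [la [lb [lc [ld [kA [kB [kC [kD [y1 [y2 [y3 [y4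
  [hD0 hl hk [ea eb ec ed] [eA eB eC eD]]]]]]]]]]]]]]]]] := normal_form hA hB hC hD hgen.
move: hA hC; subst => hA hC.
exact (@core_main R V1 V2 V3 la lb lc ld kA kB kC kD y1 y2 y3 y4 hD0 hl hk hA.1 hC.1).
Qed.
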